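(* Let $X$ be a real random variable and let $Y_1\sim\mathcal{N}(0,\sigma_{Y_1}^2)$, $Y_2\sim\mathcal{N}(0,\sigma_{Y_2}^2)$ with $\sigma_{Y_1}>\sigma_{Y_2}\ge0$, where $X$ is independent of $Y_1$ and $X$ is independent of $Y_2$. Then for all $\varepsilon\in\mathbb{R}$, $$\mathbb{P}[X+|Y_1|\le\varepsilon]\le\mathbb{P}[X+|Y_2|\le\varepsilon].$$
   Context: $\mathcal{N}(0,0)$ denotes the point mass at $0$. *)

(* Defs.v *)
From HB Require Import structures.
From mathcomp Require Import all_boot all_order all_algebra.
From mathcomp Require Import all_classical all_reals all_analysis.
Set Implicit Arguments. Unset Strict Implicit. Unset Printing Implicit Defensive.
Import Order.TTheory GRing.Theory Num.Theory.
Local Open Scope classical_set_scope.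
Local Open Scope ring_scope.

(* Centered Gaussian law N(0, s^2), parameterized by the standard deviation
   s >= 0. Following the paper's convention, N(0,0) is the point mass at 0
   (the library's [normal_prob 0 0] is NOT a point mass, hence the case split). *)
Definition gauss_law (R : realType) (s : R) : set R -> \bar R :=
  fun A => if s == 0 then \d_(0 : R) A else normal_prob 0 s A.

Definition has_law d (T : measurableType d) (R : realType)
  (P : probability T R) (Y : {RV P >-> R}) (mu : set R -> \bar R) : Prop :=
  forall A : set R, measurable A -> distribution P Y A = mu A.

Definition indep2 d (T : measurableType d) (R : realType)
  (P : probability T R) (X Y : {RV P >-> R}) : Prop :=
  forall A B : set R, measurable A -> measurable B ->
    P (X @^-1` A `&` Y @^-1` B) = (P (X @^-1` A) * P (Y @^-1` B))%E.

(* Main.v *)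
Require Import Defs.
From HB Require Import structures.
From mathcomp Require Import all_boot all_order all_algebra.
From mathcomp Require Import all_classical all_reals all_analysis.
From mathcomp Require Import ring lra measurable_realfun.
Import Order.TTheory GRing.Theory Num.Theory.
Import numFieldTopology.Exports numFieldNormedType.Exports.
Local Open Scope classical_set_scope.
Local Open Scope ring_scope.

Section G.
Context {R : realType}.
Notation mu := (@lebesgue_measure R).

Lemma Fder (s x : R) : (fun z : R => s * z)^`()%classic x = s.
Proof.
have := @derive1Ml R id x s (@derivable_id _ _ _ _).
by rewrite derive1_id mulr1.
Qed.

Lemma pdf_scale (s x : R) : 0 < s ->
  normal_pdf 0 s (s * x) * s = normal_pdf 0 1 x.
Proof.
move=> s0.
rewrite /normal_pdf gt_eqF // oner_eq0 /normal_peak /normal_fun !subr0.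
rewrite expr1n !mul1r.
have -> : - (s * x) ^+ 2 / (s ^+ 2 *+ 2) = - x ^+ 2 / 2.
  by rewrite exprMn -mulr_natr; field; rewrite gt_eqF.
have -> : s ^+ 2 * pi *+ 2 = s ^+ 2 * (pi *+ 2) by rewrite -mulrnAr.
rewrite sqrtrM ?sqr_ge0 //.
rewrite sqrtr_sqr gtr0_norm // invfM.
rewrite [_ * s]mulrC !mulrA mulfV ?gt_eqF // mul1r.
congr (_ * expR (_ * _^-1)).

Qed.

Lemma normal_scale (s u : R) : 0 < s -> 0 <= u ->
  normal_prob 0 s `[-u, u] = normal_prob 0 1 `[-(u/s), u/s].
Proof.
move=> s0 u0.
rewrite /normal_prob.
have := @integration_by_substitution_increasing R (fun z => s * z) (normal_pdf 0 s)
  (-(u/s)) (u/s).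
rewrite mulrN mulrCA mulfV ?gt_eqF // mulr1.
have hF : (fun z => s * z)^`()%classic = cst s by apply/funext => y; rewrite Fder.
have hc : {within `[-u, u]%classic, continuous (normal_pdf 0 s)}.
  apply/continuous_subspaceT => x. exact: (@continuous_normal_pdf R 0 s (negbT (gt_eqF s0)) x). 
rewrite hF => ->.
- apply: eq_integral => x _ /=; congr (_%:E).
  exact: pdf_scale.
- by rewrite ge0_cp // divr_ge0 // ltW.
- by move=> x y _ _ xy; rewrite ltr_pM2l.
- by move=> x _; exact: cvg_cst.
- exact: is_cvg_cst.
- exact: is_cvg_cst.
- split.
  + by move=> x _; apply: derivableM => //; exact: derivable_id.
  + apply: cvg_at_right_filter; exact: mulrl_continuous.
  + apply: cvg_at_left_filter; exact: mulrl_continuous.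
- exact: hc.
Qed.

Lemma absle_itv (u : R) : [set y : R | `|y| <= u] = `[-u, u]%classic.
Proof. by apply/seteqP; split => y /=; rewrite in_itv /= ler_norml. Qed.

Lemma gauss_dom (s1 s2 u : R) : s2 < s1 -> 0 <= s2 ->
  (gauss_law s1 [set y : R | (`|y| <= u)%R] <= gauss_law s2 [set y : R | (`|y| <= u)%R])%E.
Proof.
move=> s12 s20.
have s10 : 0 < s1 by apply: le_lt_trans s12.
have [u0|u0] := ltP u 0.
  have -> : [set y : R | `|y| <= u] = set0.
    apply/seteqP; split => y //= h; have := le_lt_trans (normr_ge0 y) (le_lt_trans h u0).
    by rewrite ltxx.
  rewrite /gauss_law gt_eqF // measure0.
  by case: ifP => _; exact: measure_ge0.
rewrite absle_itv /gauss_law gt_eqF //.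
case: ifP => [/eqP s2E|/negbT s2n0].
  rewrite diracE mem_set /=; last by rewrite in_itv /= oppr_le0 u0.
  exact: probability_le1.
have s2p : 0 < s2 by rewrite lt_def s2n0.
rewrite (normal_scale _ _ s10 u0) (normal_scale _ _ s2p u0).
have h : u / s1 <= u / s2.
  by apply: ler_wpM2l => //; rewrite lef_pV2 ?posrE // ltW.
apply: le_measure; rewrite ?inE; try exact: measurable_itv.
by apply: subset_itv; rewrite bnd_simp ?lerN2.
Qed.
End G.

Section pair.
Context d (T : measurableType d) (R : realType) (P : probability T R).
Variables (X Y : {RV P >-> R}).
Definition pairf := fun w => (X w, Y w).
Lemma mpairf : measurable_fun setT pairf.
Proof. exact: measurable_fun_pair. Qed.
HB.instance Definition _ := isMeasurableFun.Build _ _ _ _ pairf mpairf.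

Lemma joint_prod (Z : set (R * R)) : measurable Z -> indep2 X Y ->
  ((distribution P X \x distribution P Y) Z = distribution P pairf Z)%E.
Proof.
move=> mZ hi; apply: product_measure_unique => // A B mA mB.
Qed.
End pair.

Theorem lemma4 (d : measure_display) (T : measurableType d) (R : realType)
  (P : probability T R) (X Y1 Y2 : {RV P >-> R}) (s1 s2 : R)
  (hs : s2 < s1) (hs2 : 0 <= s2)
  (hY1 : has_law Y1 (gauss_law s1)) (hY2 : has_law Y2 (gauss_law s2))
  (hXY1 : indep2 X Y1) (hXY2 : indep2 X Y2) (eps : R) :
  (P [set w | (X w + `|Y1 w| <= eps)%R] <= P [set w | (X w + `|Y2 w| <= eps)%R])%E.
Proof.
pose S := [set p : R * R | (p.1 + `|p.2| <= eps)%R].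
have mS : measurable S.
  have mf : measurable_fun setT (fun p : R * R => p.1 + `|p.2|).
    apply: measurable_funD; first exact: measurable_fst.
    by apply: measurableT_comp => //; exact: measurable_snd.
  have := mf measurableT _ (measurable_itv `]-oo, eps]).
  rewrite setTI; congr measurable; apply/seteqP; split => p /=;
    by rewrite in_itv /=.
have hE : forall Y, indep2 X Y -> P [set w | (X w + `|Y w| <= eps)%R] =
    (\int[distribution P X]_x (distribution P Y \o xsection S) x)%E.
  by move=> Y hi; exact: (esym (@joint_prod _ _ _ P X Y S mS hi)).
rewrite (hE _ hXY1) (hE _ hXY2).
apply: ge0_le_integral => //.
- exact: (measurable_fun_xsection (distribution P Y1) mS).
- exact: (measurable_fun_xsection (distribution P Y2) mS).
move=> x _ /=.
have mx := measurable_xsection x mS.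
rewrite hY1 // hY2 //.
have -> : xsection S x = [set y : R | (`|y| <= eps - x)%R].
  apply/seteqP; split => y; rewrite /xsection /S /= inE /=; by rewrite lerBrDl.
exact: gauss_dom.
Qed.
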